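(* Let $m\ge 2$ be even, $n\ge 1$, and let $\mathcal{T}=(t_{i_1 i_2\cdots i_m})\in\mathbb{R}^{[m,n]}$ be a Nekrasov $Z$ tensor all of whose diagonal elements $t_{i i\cdots i}$ ($i\in[n]$) are positive. Then $\mathcal{T}$ is a $P$-tensor, i.e. for every $x\in\mathbb{R}^n\setminus\{0\}$ there exists $j\in[n]$ with $x_j\neq 0$ and $x_j(\mathcal{T}x^{m-1})_j>0$.
   Context: $[n]=\{1,\dots,n\}$ and $\mathbb{R}^{[m,n]}$ denotes the set of real tensors $\mathcal{T}=(t_{i_1\cdots i_m})$ with $i_1,\dots,i_m\in[n]$ (order $m$, dimension $n$). For $x\in\mathbb{R}^n$, $(\mathcal{T}x^{m-1})_i=\sum_{i_2,\dots,i_m=1}^n t_{i i_2\cdots i_m}x_{i_2}\cdots x_{i_m}$. A diagonal element is $t_{i\cdots i}$; all other entries are off-diagonal. $\mathcal{T}$ is a $Z$ tensor if all its off-diagonal entries are nonpositive. For $\mathcal{T}$ with $t_{i\cdots i}\neq 0$ for all $i$, define $R_i(\mathcal{T})=\sum_{(i_2,\dots,i_m)\neq(i,\dots,i)}|t_{i i_2\cdots i_m}|$, $\Lambda_1(\mathcal{T})=R_1(\mathcal{T})$, and for $i=2,\dots,n$ $$\Lambda_i(\mathcal{T})=\sum_{(i_2,\dots,i_m)\in[i-1]^{m-1}}|t_{i i_2\cdots i_m}|\Big(\tfrac{\Lambda_{i_2}(\mathcal{T})}{|t_{i_2\cdots i_2}|}\Big)^{\frac{1}{m-1}}\cdots\Big(\tfrac{\Lambda_{i_m}(\mathcal{T})}{|t_{i_m\cdots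 i_m}|}\Big)^{\frac{1}{m-1}}+\sum_{(i_2,\dots,i_m)\notin[i-1]^{m-1},\ (i_2,\dots,i_m)\neq(i,\dots,i)}|t_{i i_2\cdots i_m}|.$$ $\mathcal{T}$ is a Nekrasov tensor if $|t_{i\cdots i}|>\Lambda_i(\mathcal{T})$ for all $i\in[n]$. A Nekrasov $Z$ tensor is a tensor that is both a Nekrasov tensor and a $Z$ tensor. *)

(* Defs.v *)
From HB Require Import structures.
From mathcomp Require Import all_boot all_order all_algebra.
From mathcomp Require Import reals exp.
Set Implicit Arguments. Unset Strict Implicit. Unset Printing Implicit Defensive.
Import Order.TTheory GRing.Theory Num.Theory.
Local Open Scope ring_scope.

(* A real tensor of order m and dimension n, T = (t_{i1 i2 ... im}), is
   encoded as t : 'I_n -> (m.-1).-tuple 'I_n -> R, where  t i1 [i2;...;im]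
   is the entry t_{i1 i2 ... im}.  (Indices are 0-based: [n] = 'I_n.) *)
Definition tensor (R : Type) (m n : nat) := 'I_n -> (m.-1).-tuple 'I_n -> R.

Section Tensors.
Variables (R : realType) (m n : nat).
Implicit Types (t : tensor R m n).

Definition dg (i : 'I_n) : (m.-1).-tuple 'I_n := nseq_tuple (m.-1) i.

Definition tdiag t (i : 'I_n) : R := t i (dg i).

Definition tapply t (x : 'I_n -> R) (i : 'I_n) : R :=
  \sum_(tau : (m.-1).-tuple 'I_n) t i tau * \prod_(j <- tau) x j.

Definition Ztensor t : Prop :=
  forall (i : 'I_n) (tau : (m.-1).-tuple 'I_n), tau != dg i -> t i tau <= 0.

(* One step of the recursive definition of Lambda_i, given the (already
   computed) values f j = Lambda_j for j < i. *)
Definition lam_step t (f : nat -> R) (i : 'I_n) : R :=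
  \sum_(tau : (m.-1).-tuple 'I_n)
     (if all (fun j : 'I_n => (j < i)%N) tau then
        `|t i tau| * \prod_(j <- tau)
                       ((f (val j) / `|tdiag t j|) `^ ((m.-1)%:R)^-1)
      else if tau != dg i then `|t i tau| else 0).

(* lamf k j = Lambda_j for j < k *)
Fixpoint lamf t (k : nat) : nat -> R :=
  match k with
  | 0 => fun _ => 0
  | k.+1 => fun j =>
      if (j < k)%N then lamf t k j
      else match @insub _ (fun a : nat => (a < n)%N) 'I_n k with
           | Some i => lam_step t (lamf t k) i
           | None => 0
           end
  end.

Definition Lambda t (i : 'I_n) : R := lamf t n (val i).

Definition Nekrasov t : Prop := forall i : 'I_n, Lambda t i < `|tdiag t i|.

Definition Ptensor t : Prop :=
  forall x : 'I_n -> R, (exists i, x i != 0) ->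
    exists j : 'I_n, x j != 0 /\ 0 < x j * tapply t x j.

End Tensors.

(* Main.v *)
Require Import Defs.
From HB Require Import structures.
From mathcomp Require Import all_boot all_order all_algebra.
From mathcomp Require Import reals exp.
From mathcomp Require Import lra.
Import Order.TTheory GRing.Theory Num.Theory.
Local Open Scope ring_scope.

Section Aux.
Variables (R : realType) (m n : nat) (t : tensor R m n).

Lemma lamf_stable_aux {j k : nat} (d : nat) : (j < k)%N -> lamf t (k + d) j = lamf t k j.
Proof.
move=> jk; elim: d => [|d IH]; first by rewrite addn0.
by rewrite addnS /= (leq_trans jk (leq_addr d k)) IH.

Qed.

Lemma lamf_stable {j k : nat} : (j < k)%N -> (k <= n)%N -> lamf t n j = lamf t k j.
Proof.
move=> jk kn; have := lamf_stable_aux (n - k) jk; by rewrite (subnKC kn).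

Qed.

Lemma Lambda_step (i : 'I_n) : Lambda t i = lam_step t (lamf t i) i.
Proof.
rewrite /Lambda (lamf_stable (ltnSn i) (ltn_ord i)) /= ltnn.
by rewrite (valK i).

Qed.

Lemma lam_step_ge0 f (i : 'I_n) : 0 <= lam_step t f i.
Proof.
apply: sumr_ge0 => tau _; case: ifP => _.
  by apply: mulr_ge0 => //; apply: prodr_ge0 => j _; apply: powR_ge0.
by case: ifP.

Qed.

Lemma Lambda_ge0 (i : 'I_n) : 0 <= Lambda t i.
Proof. rewrite Lambda_step; exact: lam_step_ge0. Qed.

End Aux.

Lemma prod_const_tuple (R : realType) k (I : Type) (tau : k.-tuple I) (c : R) :
  \prod_(l <- tau) c = c ^+ k.
Proof. by rewrite big_const_seq count_predT size_tuple iter_mulr_1. Qed.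

Theorem mainTheorem1 (R : realType) (m n : nat) (t : tensor R m n) :
  (2 <= m)%N -> ~~ odd m -> (1 <= n)%N ->
  Ztensor t -> Nekrasov t ->
  (forall i : 'I_n, 0 < tdiag t i) ->
  Ptensor t.
Proof.
move=> m2 mev n1 _ Nek dpos x [i0 xi0].
set k := m.-1.
have mk : m = k.+1 by rewrite /k prednK // (leq_trans _ m2).
have k0 : (0 < k)%N by rewrite /k -ltnS -mk.
set u := fun l => `|x l|.
have u0 l : 0 <= u l by rewrite /u normr_ge0.
case: (boolP [exists j, (x j != 0) && (0 < x j * tapply t x j)]).
  by move/existsP=> [j /andP[? ?]]; exists j.
rewrite negb_exists => /forallP Hn.
have Hle j : x j != 0 -> x j * tapply t x j <= 0.
  by move=> xj; have := Hn j; rewrite xj /= real_ltNge ?realE ?le_total // negbK.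
pose S (j : 'I_n) := \sum_(tau : (m.-1).-tuple 'I_n | tau != dg m j) `|t j tau| * \prod_(l <- tau) u l.
have S0 j : 0 <= S j.
  by apply: sumr_ge0 => tau _; apply: mulr_ge0 => //; apply: prodr_ge0.
have H1 j : tdiag t j * u j ^+ k <= S j.
  have [xj0|xj] := eqVneq (x j) 0.
    by rewrite /u xj0 normr0 expr0n eqn0Ngt k0 mulr0.
  have uj : 0 < u j by rewrite normr_gt0.
  rewrite -(ler_pM2l uj).
  have := Hle j xj; rewrite /tapply mulr_sumr (bigD1 (dg m j)) //= big_nseq iter_mulr_1.
move=> H.
  have HA : - (u j * S j) <= \sum_(i | i != dg m j) x j * (t j i * \prod_(j0 <- i) x j0).
    rewrite /S mulr_sumr -sumrN; apply: ler_sum => tau _.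
    rewrite lerNl; apply: le_trans (ler_norm _) _.
    by rewrite normrN !normrM normr_prod.
  have HD : x j * (t j (dg m j) * x j ^+ m.-1) = u j * (tdiag t j * u j ^+ k).
    rewrite [LHS]mulrCA [RHS]mulrCA -!exprS /k !prednK ?(ltnW m2) // /u /tdiag.
    congr (_ * _).
    rewrite -(odd_double_half m) (negbTE mev) add0n -mul2n !exprM real_normK ?num_real //.
  rewrite HD in H; lra.
have [imax Hmax] : exists imax, forall l, u l <= u imax.
  case: (@arg_maxP _ R _ i0 xpredT u isT) => imax _ H.
  by exists imax => l; exact: H l isT.
set M := u imax.
have M0 : 0 < M by apply: lt_le_trans (Hmax i0); rewrite normr_gt0.
have Lmono : forall p (i : 'I_n), val i = p ->
    tdiag t i * u i ^+ k <= M ^+ k * Lambda t i.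
  elim/ltn_ind => p IH i ip.
  have IHd : forall l : 'I_n, (l < i)%N ->
      u l <= M * (Lambda t l / `|tdiag t l|) `^ (k%:R)^-1.
    move=> l li; have Hl := IH l ltac:(by rewrite -ip) l erefl.
    have a0 : 0 <= Lambda t l / `|tdiag t l| by rewrite divr_ge0 ?Lambda_ge0.
    rewrite -(ler_pXn2r k0) ?nnegrE ?mulr_ge0 ?powR_ge0 ?(ltW M0) //.
    rewrite exprMn -[(_ `^ _) ^+ k]powR_mulrn ?powR_ge0 // -powRrM mulVf ?pnatr_eq0 -?lt0n //.
    rewrite powRr1 // (ger0_norm (ltW (dpos l))) mulrA ler_pdivlMr // mulrC.
    exact: Hl.
  apply: le_trans (H1 i) _.
  rewrite Lambda_step /lam_step /S big_mkcond mulr_sumr /=; apply: ler_sum => tau _.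
  case Hall: (all (fun j : 'I_n => (j < i)%N) tau).
    apply: (le_trans (y := `|t i tau| * \prod_(l <- tau) u l)).
      by case: ifP => _ //; apply: mulr_ge0 => //; apply: prodr_ge0.
    rewrite mulrCA ler_wpM2l //.
    apply: (le_trans (y := \prod_(l <- tau) (M * (lamf t i l / `|tdiag t l|) `^ (k%:R)^-1))).
      rewrite big_seq_cond [X in _ <= X]big_seq_cond; apply: ler_prod => l /andP[lt _].
      rewrite u0 /=.
      have li : (l < i)%N := allP Hall l lt.
      rewrite -(@lamf_stable R m n t _ _ li (ltnW (ltn_ord i))); exact: IHd.
    by rewrite big_split /= prod_const_tuple.
  case: ifP => _; last by rewrite mulr0.
  rewrite mulrC; apply: ler_wpM2r => //; rewrite -(@prod_const_tuple R k _ tau M); apply: ler_prod => l _.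
  by rewrite u0 Hmax.
have HL := Lmono _ imax erefl.
have NL := Nek imax; rewrite (ger0_norm (ltW (dpos imax))) in NL.
have : M ^+ k * Lambda t imax < M ^+ k * tdiag t imax by rewrite ltr_pM2l // exprn_gt0.
rewrite [X in _ < X]mulrC => /lt_le_trans /(_ HL); by rewrite ltxx.

Qed.
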